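(* Let $F(d)=1/d^2$. Let $(x_n)_{n\in\mathbb Z}$ and $(y_n)_{n\in\mathbb Z}$ be two uniformly discrete configurations such that $\{x_n: x_n\ge0\}=\{y_n: y_n\ge 0\}=:W$ and such that, in each of the two configurations, every particle located at a point of $W$ is in equilibrium. Then $\{x_n:x_n<0\}=\{y_n:y_n<0\}$.
   Context: A configuration is a strictly increasing bi-infinite sequence $(x_n)_{n\in\mathbb Z}$ of reals; it is uniformly discrete if there are constants $0<c\le C<\infty$ with $c\le x_n-x_{n-1}\le C$ for all $n\in\mathbb Z$. With force law $F$ (here $F(d)=1/d^2$), the particle at $x_n$ is in equilibrium if $\sum_{m<n}F(x_n-x_m)$ and $\sum_{m>n}F(x_m-x_n)$ are both finite and equal. *)

(* Defs.v *)
From Stdlib Require Import Reals Lra Lia ZArith.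
Open Scope R_scope.

Definition F (d : R) : R := / (d ^ 2).

Definition strictly_increasing (x : Z -> R) : Prop :=
  forall n m : Z, (n < m)%Z -> x n < x m.

Definition uniformly_discrete (x : Z -> R) : Prop :=
  strictly_increasing x /\
  exists c C : R, 0 < c /\ c <= C /\
    forall n : Z, c <= x n - x (n - 1)%Z /\ x n - x (n - 1)%Z <= C.

(* Left sum  sum_{m<n} F(x_n - x_m): the m = n-1-k term, k : nat.
   Right sum sum_{m>n} F(x_m - x_n): the m = n+1+k term.
   Terms are positive, so convergence/value is order independent. *)
Definition left_term (x : Z -> R) (n : Z) (k : nat) : R :=
  F (x n - x (n - Z.of_nat (S k))%Z).
Definition right_term (x : Z -> R) (n : Z) (k : nat) : R :=
  F (x (n + Z.of_nat (S k))%Z - x n).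

Definition in_equilibrium (x : Z -> R) (n : Z) : Prop :=
  exists L : R, infinite_sum (left_term x n) L /\ infinite_sum (right_term x n) L.

(* Main.v *)
Require Import Defs.
From Stdlib Require Import Reals ZArith Lra Lia FunctionalExtensionality.
From Coquelicot Require Import Coquelicot.
Open Scope R_scope.

Fixpoint sumr (f : nat -> R) (n : nat) : R :=
  match n with O => 0 | S n' => sumr f n' + f n' end.
Fixpoint prodr (f : nat -> R) (n : nat) : R :=
  match n with O => 1 | S n' => prodr f n' * f n' end.
Definition rr (w : nat -> R) (p : R) (i : nat) : R := / (w i - p).
Fixpoint DD (w : nat -> R) (k : nat) (V : nat -> R) (j : nat) : R :=
  match k with O => V j | S k' => (DD w k' V j - DD w k' V k') / (w j - w k') end.

Lemma ser_minus (a b : nat -> R) la lb :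
  is_series a la -> is_series b lb -> is_series (fun n => a n - b n) (la - lb).
Proof. intros Ha Hb. exact (is_series_minus a b la lb Ha Hb). Qed.

Lemma DD_lin (w : nat -> R) (V : nat -> nat -> R) (v : nat -> R) :
  (forall j, is_series (fun m => V m j) (v j)) ->
  forall k j, is_series (fun m => DD w k (V m) j) (DD w k v j).
Proof.
  intros H k; induction k as [|k IH]; intros j; simpl.
  - apply H.
  - unfold Rdiv. apply is_series_scal_r. apply ser_minus; apply IH.
Qed.

Lemma DD_zero (w : nat -> R) k j : DD w k (fun _ => 0) j = 0.
Proof.
  revert j; induction k as [|k IH]; intros j; simpl; auto.
  rewrite !IH. unfold Rdiv. ring.
Qed.

Lemma DD_minus (w : nat -> R) f g k j :
  DD w k (fun j => f j - g j) j = DD w k f j - DD w k g j.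
Proof.
  revert j; induction k as [|k IH]; intros j; simpl; auto.
  rewrite !IH. unfold Rdiv. ring.
Qed.

Lemma w_mono (w : nat -> R) : (forall i j, (i < j)%nat -> w i < w j) ->
  forall i j, (i <= j)%nat -> w i <= w j.
Proof.
  intros H i j Hij. destruct (Nat.eq_dec i j). subst; lra.
  left; apply H; lia.
Qed.

Lemma DD_pole (w : nat -> R) (p : R) :
  (forall i j, (i < j)%nat -> w i < w j) -> p < w 0%nat ->
  forall k j, (k <= j)%nat ->
  DD w k (fun j => F (w j - p)) j =
  (-1)^k * (prodr (rr w p) k * (rr w p j)^2 + prodr (rr w p) k * sumr (rr w p) k * rr w p j).
Proof.
  intros Hw Hp k; induction k as [|k IH]; intros j Hj.
  - simpl. unfold F, rr.
    assert (w j - p <> 0). { pose proof (w_mono w Hw 0 j ltac:(lia)). lra. }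
    field. auto.
  - cbn [DD]. rewrite (IH j ltac:(lia)), (IH k ltac:(lia)).
    assert (w j - p <> 0). { pose proof (w_mono w Hw 0 j ltac:(lia)). lra. }
    assert (w k - p <> 0). { pose proof (w_mono w Hw 0 k ltac:(lia)). lra. }
    assert (w j - w k <> 0). { pose proof (Hw k j ltac:(lia)). lra. }
    cbn [prodr sumr pow]. unfold rr. field. repeat split; auto.
Qed.

Lemma sumr_front f n : sumr f (S n) = f 0%nat + sumr (fun m => f (S m)) n.
Proof. induction n; simpl in *. ring. rewrite IHn. ring. Qed.

Lemma sumr_le f g n : (forall i, (i < n)%nat -> f i <= g i) -> sumr f n <= sumr g n.
Proof. induction n; simpl; intros H. lra. pose proof (H n ltac:(lia)).
  assert (sumr f n <= sumr g n) by (apply IHn; intros; apply H; lia). lra. Qed.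

Lemma sumr_nonneg f n : (forall i, 0 <= f i) -> 0 <= sumr f n.
Proof. intros H; induction n; simpl. lra. pose proof (H n). lra. Qed.

Lemma sumr_minus f g n : sumr (fun i => f i - g i) n = sumr f n - sumr g n.
Proof. induction n; simpl. ring. rewrite IHn; ring. Qed.

Lemma sumr_scal f k n : sumr (fun i => k * f i) n = k * sumr f n.
Proof. induction n; simpl. ring. rewrite IHn; ring. Qed.

Lemma prodr_pos f n : (forall i, 0 < f i) -> 0 < prodr f n.
Proof. intros H; induction n; simpl. lra. pose proof (H n). nra. Qed.

Lemma sum_f_R0_sumr a n : sum_f_R0 a n = sumr a (S n).
Proof. induction n; simpl in *. ring. rewrite IHn. ring. Qed.

Lemma inv_sq_sum c : 0 < c -> forall M A, 0 < A ->
  sumr (fun m => / (A + INR m * c)^2) M <= / A^2 + / (c * A).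
Proof.
  intros Hc M; induction M as [|M IH]; intros A HA.
  - assert (0 < /A^2) by (apply Rinv_0_lt_compat; apply pow_lt; lra).
    assert (0 < /(c*A)) by (apply Rinv_0_lt_compat; apply Rmult_lt_0_compat; lra). cbn [sumr]; lra.
  - rewrite sumr_front. simpl (INR 0). 
    replace (fun m => / (A + INR (S m) * c) ^ 2) with (fun m => / ((A + c) + INR m * c) ^ 2).
    2:{ apply functional_extensionality; intros m. rewrite S_INR. f_equal. ring. }
    pose proof (IH (A + c) ltac:(lra)).
    assert (/ (A + c) ^ 2 + / (c * (A + c)) <= / (c * A)).
    { assert (E: / (c * A) - (/ (A + c) ^ 2 + / (c * (A + c))) = c / (A * (A+c)^2)) by (field; lra).
      assert (0 < c / (A * (A+c)^2)). { apply Rdiv_lt_0_compat; auto. apply Rmult_lt_0_compat; auto. apply pow_lt; lra. }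
      lra. }
    replace (A + 0 * c) with A by ring. lra.
Qed.

Definition hh n := sumr (fun i => / (INR i + 1)) n.

Lemma hh_double n : (1 <= n)%nat -> hh (2 * n) >= hh n + / 2.
Proof.
  induction n as [|n IH]; intros Hn. lia.
  destruct n as [|n].
  - unfold hh; simpl. lra.
  - specialize (IH ltac:(lia)).
    replace (2 * S (S n))%nat with (S (S (2 * S n))) by lia.
    unfold hh in *. cbn [sumr] in IH |- *. 
    assert (/ (INR (S (2 * S n)) + 1) + / (INR (2 * S n) + 1) >= / (INR (S n) + 1)).
    { rewrite S_INR, mult_INR. replace (INR 2) with 2 by (simpl; ring).
      pose proof (pos_INR (S n)). set (m := INR (S n)) in *.
      assert (E: / (m + 1) = / (2 * m + 1 + 1) + / (2 * m + 1 + 1)) by (field; lra).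
      assert (/ (2 * m + 1) >= / (2 * m + 1 + 1)).
      { apply Rle_ge, Rinv_le_contravar; lra. }
      lra. }
    lra.
Qed.

Lemma hh_pow k : hh (2 ^ k) >= INR k / 2.
Proof.
  induction k as [|k IH].
  - unfold hh; simpl. lra.
  - replace (2 ^ S k)%nat with (2 * 2 ^ k)%nat by (simpl; lia).
    assert (1 <= 2 ^ k)%nat by (apply Nat.pow_le_mono_r with (a:=2%nat) (b:=0%nat) (c:=k); lia).
    pose proof (hh_double (2^k) H). rewrite S_INR. lra.
Qed.

Lemma hh_unbounded T : exists n, hh n >= T.
Proof.
  destruct (INR_unbounded (2 * T)) as [k Hk].
  exists (2 ^ k)%nat. pose proof (hh_pow k). lra.
Qed.

Definition QQ (w : nat -> R) n p := prodr (rr w p) n * sumr (rr w p) n.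

Lemma rr_pos (w : nat -> R) p i :
  (forall i j, (i < j)%nat -> w i < w j) -> p < w 0%nat -> 0 < rr w p i.
Proof. intros Hw Hp. unfold rr. apply Rinv_0_lt_compat.
  pose proof (w_mono w Hw 0 i ltac:(lia)). lra. Qed.

Lemma QQ_nonneg w n p :
  (forall i j, (i < j)%nat -> w i < w j) -> p < w 0%nat -> 0 <= QQ w n p.
Proof. intros Hw Hp. unfold QQ.
  pose proof (prodr_pos (rr w p) n (fun i => rr_pos w p i Hw Hp)).
  pose proof (sumr_nonneg (rr w p) n (fun i => Rlt_le _ _ (rr_pos w p i Hw Hp))). nra. Qed.

Lemma M_bound (t : nat -> R) d : 0 <= d -> (forall i, 0 <= t i) -> forall n, (1 <= n)%nat ->
  prodr (fun i => 1 + d * t i) n >= (1 + d * t 0%nat) * (1 + d * (sumr t n - t 0%nat)).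
Proof.
  intros Hd Ht n; induction n as [|n IH]; intros Hn. lia.
  destruct n as [|n]. simpl. lra.
  specialize (IH ltac:(lia)).
  change (prodr (fun i => 1 + d * t i) (S (S n))) with (prodr (fun i => 1 + d * t i) (S n) * (1 + d * t (S n))).
  change (sumr t (S (S n))) with (sumr t (S n) + t (S n)).
  assert (0 <= sumr t (S n) - t 0%nat).
  { rewrite sumr_front. pose proof (sumr_nonneg (fun m => t (S m)) n (fun i => Ht (S i))). lra. }
  pose proof (Ht 0%nat). pose proof (Ht (S n)).
  assert (0 <= d * t 0%nat) by nra. assert (0 <= d * t (S n)) by nra.
  assert (0 <= d * (sumr t (S n) - t 0%nat)) by nra.
  set (P := prodr (fun i => 1 + d * t i) (S n)) in *.
  set (A := d * t 0%nat) in *. set (e := d * t (S n)) in *.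
  set (B := d * (sumr t (S n) - t 0%nat)) in *.
  replace (d * (sumr t (S n) + t (S n) - t 0%nat)) with (B + e) by (unfold B, e; ring).
  assert (P * (1 + e) >= (1 + A) * (1 + B) * (1 + e)).
  { apply Rle_ge, Rmult_le_compat_r; lra. }
  assert (0 <= (1 + A) * (B * e)) by (apply Rmult_le_pos; [lra| apply Rmult_le_pos; lra]).
  assert (E: (1 + A) * (1 + B) * (1 + e) = (1 + A) * (1 + (B + e)) + (1 + A) * (B * e)) by ring.
  lra.
Qed.

Lemma prod_split (w : nat -> R) s b n :
  (forall i j, (i < j)%nat -> w i < w j) -> s < w 0%nat -> b < s ->
  prodr (rr w s) n = prodr (rr w b) n * prodr (fun i => 1 + (s - b) * rr w s i) n.
Proof.
  intros Hw Hs Hb. induction n as [|n IH]. simpl; ring.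
  simpl. rewrite IH. unfold rr.
  pose proof (w_mono w Hw 0 n ltac:(lia)).
  field. split; lra.
Qed.

Lemma QQ_bound (w : nat -> R) s b n :
  (forall i j, (i < j)%nat -> w i < w j) -> s < w 0%nat -> b < s -> (1 <= n)%nat ->
  QQ w n b * ((s - b) * rr w s 0%nat) * ((s - b) * (sumr (rr w s) n - rr w s 0%nat)) <= QQ w n s.
Proof.
  intros Hw Hs Hb Hn. unfold QQ.
  assert (Hb0 : b < w 0%nat) by lra.
  rewrite (prod_split w s b n Hw Hs Hb).
  pose proof (M_bound (rr w s) (s - b) ltac:(lra) (fun i => Rlt_le _ _ (rr_pos w s i Hw Hs)) n Hn).
  set (M := prodr (fun i => 1 + (s - b) * rr w s i) n) in *.
  pose proof (prodr_pos (rr w b) n (fun i => rr_pos w b i Hw Hb0)).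
  set (Pb := prodr (rr w b) n) in *.
  assert (Hsum : sumr (rr w b) n <= sumr (rr w s) n).
  { apply sumr_le. intros i _. unfold rr. pose proof (w_mono w Hw 0 i ltac:(lia)).
    apply Rinv_le_contravar; lra. }
  pose proof (sumr_nonneg (rr w b) n (fun i => Rlt_le _ _ (rr_pos w b i Hw Hb0))).
  assert (0 <= sumr (rr w s) n - rr w s 0%nat).
  { destruct n. lia. rewrite sumr_front. pose proof (sumr_nonneg (fun m => rr w s (S m)) n (fun i => Rlt_le _ _ (rr_pos w s (S i) Hw Hs))). lra. }
  pose proof (rr_pos w s 0 Hw Hs).
  set (X := (s - b) * rr w s 0%nat) in *.
  set (Y := (s - b) * (sumr (rr w s) n - rr w s 0%nat)) in *.
  assert (0 <= X) by (unfold X; nra). assert (0 <= Y) by (unfold Y; nra).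
  assert (X * Y <= M) by nra.
  set (Sb := sumr (rr w b) n) in *. set (Ss := sumr (rr w s) n) in *.
  assert (Pb * Sb * X * Y <= Pb * Ss * (X * Y)).
  { replace (Pb * Sb * X * Y) with (Pb * Sb * (X * Y)) by ring.
    apply Rmult_le_compat_r. nra. apply Rmult_le_compat_l; lra. }
  assert (Pb * Ss * (X * Y) <= Pb * Ss * M).
  { apply Rmult_le_compat_l. nra. lra. }
  nra.
Qed.

Lemma stepA (w a b : nat -> R) :
  (forall i j, (i < j)%nat -> w i < w j) ->
  (forall m, a m < w 0%nat) -> (forall m, b m < w 0%nat) ->
  (forall j, is_series (fun m => F (w j - a m) - F (w j - b m)) 0) ->
  forall N, is_series (fun m => QQ w (S N) (a m) - QQ w (S N) (b m)) 0.
Proof.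
  intros Hw Ha Hb Hs N.
  pose proof (DD_lin w (fun m j => F (w j - a m) - F (w j - b m)) (fun _ => 0) Hs N N) as H.
  rewrite DD_zero in H.
  apply (is_series_scal_r ((-1)^N)) in H.
  rewrite Rmult_0_l in H.
  eapply is_series_ext; [|exact H].
  intros m. simpl.
  rewrite (DD_minus w (fun j => F (w j - a m)) (fun j => F (w j - b m))).
  rewrite (DD_pole w (a m) Hw (Ha m) N N (le_n N)).
  rewrite (DD_pole w (b m) Hw (Hb m) N N (le_n N)).
  unfold QQ. cbn [prodr sumr].
  assert (E1 : (-1)^N * (-1)^N = 1).
  { rewrite <- Rpow_mult_distr. replace (-1 * -1) with 1 by ring. apply pow1. }
  transitivity ((-1)^N * (-1)^N * (prodr (rr w (a m)) N * rr w (a m) N * (sumr (rr w (a m)) N + rr w (a m) N) -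
   prodr (rr w (b m)) N * rr w (b m) N * (sumr (rr w (b m)) N + rr w (b m) N))).
  - ring.
  - rewrite E1. ring.
Qed.

Lemma w_lin (w : nat -> R) C : (forall i, w (S i) - w i <= C) ->
  forall i, w i <= w 0%nat + INR i * C.
Proof. intros H i; induction i. simpl; lra. rewrite S_INR. pose proof (H i). lra. Qed.

Lemma b_lin (b : nat -> R) c : (forall m, b (S m) <= b m - c) ->
  forall m, b m <= b 0%nat - INR m * c.
Proof. intros H m; induction m. simpl; lra. rewrite S_INR. pose proof (H m). lra. Qed.

Lemma core (w a b : nat -> R) (c C : R) :
 0 < c -> 0 < C ->
 (forall i j, (i < j)%nat -> w i < w j) ->
 (forall i, w (S i) - w i <= C) ->
 (forall m, a m < w 0%nat) -> b 0%nat < a 0%nat ->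
 (forall m, b (S m) <= b m - c) ->
 (forall j, is_series (fun m => F (w j - a m) - F (w j - b m)) 0) -> False.
Proof.
  intros Hc HC Hw HwC Ha Hba Hbc Hser.
  set (s := a 0%nat) in *.
  assert (Hs : s < w 0%nat) by apply Ha.
  pose proof (b_lin b c Hbc) as Hbl.
  assert (Hb : forall m, b m < w 0%nat).
  { intros m. pose proof (Hbl m). pose proof (pos_INR m). nra. }
  set (d0 := s - b 0%nat).
  assert (Hd0 : 0 < d0) by (unfold d0; lra).
  set (K := / d0^2 + / (c * d0)).
  set (r0 := rr w s 0%nat).
  assert (Hr0 : 0 < r0) by (apply rr_pos; auto).
  set (E := w 0%nat - s + C).
  assert (HE : 0 < E) by (unfold E; lra).
  destruct (hh_unbounded (E * (2 * K / r0))) as [N HN].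
  set (HL := sumr (rr w s) (S N) - r0).
  assert (HH : HL >= 2 * K / r0).
  { unfold HL. rewrite sumr_front. fold r0.
    assert (sumr (fun m => rr w s (S m)) N >= / E * hh N).
    { unfold hh. rewrite <- sumr_scal. apply Rle_ge, sumr_le. intros i _.
      unfold rr. pose proof (w_lin w C HwC (S i)) as Hwl. rewrite S_INR in Hwl.
      pose proof (pos_INR i).
      pose proof (w_mono w Hw 0 (S i) ltac:(lia)).
      rewrite <- Rinv_mult. apply Rinv_le_contravar. lra.
      unfold E. nra. }
    assert (H1: / E * hh N >= / E * (E * (2 * K / r0))).
    { apply Rle_ge, Rmult_le_compat_l. left; apply Rinv_0_lt_compat; lra. lra. }
    replace (/ E * (E * (2 * K / r0))) with (2 * K / r0) in H1 by (field; lra).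
    lra. }
  assert (HK : 0 < K).
  { unfold K. assert (0 < / d0^2) by (apply Rinv_0_lt_compat; apply pow_lt; lra).
    assert (0 < / (c * d0)) by (apply Rinv_0_lt_compat; apply Rmult_lt_0_compat; lra). lra. }
  assert (HHpos : 0 < HL).
  { assert (0 < 2 * K / r0) by (apply Rdiv_lt_0_compat; lra). lra. }
  set (Qs := QQ w (S N) s).
  assert (HQs : 0 < Qs).
  { unfold Qs, QQ. apply Rmult_lt_0_compat.
    apply prodr_pos. intros; apply rr_pos; auto.
    fold HL. unfold HL in HHpos. lra. }
  assert (Hbm : forall m, QQ w (S N) (b m) <= Qs * / (r0 * HL) * / (d0 + INR m * c)^2).
  { intros m.
    pose proof (QQ_bound w s (b m) (S N) Hw Hs ltac:(pose proof (Hbl m); pose proof (pos_INR m); unfold d0 in Hd0; nra) ltac:(lia)) as Hq.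
    fold r0 in Hq. fold HL in Hq. fold Qs in Hq.
    set (dm := s - b m) in *.
    assert (Hdm : d0 + INR m * c <= dm).
    { unfold dm, d0. pose proof (Hbl m). lra. }
    pose proof (pos_INR m).
    assert (0 < d0 + INR m * c) by nra.
    pose proof (QQ_nonneg w (S N) (b m) Hw (Hb m)).
    set (q := QQ w (S N) (b m)) in *.
    assert (q * (r0 * HL) * (d0 + INR m * c)^2 <= Qs).
    { assert (q * (r0 * HL) * (d0 + INR m * c)^2 <= q * (r0 * HL) * dm^2).
      { apply Rmult_le_compat_l. apply Rmult_le_pos; [lra|]. apply Rmult_le_pos; lra.
        apply pow_incr. lra. }
      assert (q * (r0 * HL) * dm^2 = q * (dm * r0) * (dm * HL)) by ring.
      lra. }
    assert (0 < r0 * HL * (d0 + INR m * c)^2).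
    { apply Rmult_lt_0_compat. apply Rmult_lt_0_compat; lra. apply pow_lt; lra. }
    replace (Qs * / (r0 * HL) * / (d0 + INR m * c) ^ 2) with (Qs / (r0 * HL * (d0 + INR m * c) ^ 2)) by (field; split; lra).
    apply Rmult_le_reg_r with (r0 * HL * (d0 + INR m * c) ^ 2). auto.
    replace (Qs / (r0 * HL * (d0 + INR m * c) ^ 2) * (r0 * HL * (d0 + INR m * c) ^ 2)) with Qs by (field; lra).
    nra. }
  assert (Hsumb : forall M, sumr (fun m => QQ w (S N) (b m)) M <= Qs / 2).
  { intros M.
    apply Rle_trans with (sumr (fun m => Qs * / (r0 * HL) * / (d0 + INR m * c)^2) M).
    apply sumr_le; intros; apply Hbm.
    rewrite sumr_scal.
    pose proof (inv_sq_sum c Hc M d0 Hd0) as H0. fold K in H0.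
    assert (0 <= Qs * / (r0 * HL)).
    { apply Rmult_le_pos. lra. left; apply Rinv_0_lt_compat, Rmult_lt_0_compat; lra. }
    apply Rle_trans with (Qs * / (r0 * HL) * K). apply Rmult_le_compat_l; lra.
    assert (K <= r0 * HL / 2).
    { apply Rge_le in HH. apply Rmult_le_compat_l with (r := r0 / 2) in HH; [|lra].
      replace (r0 / 2 * (2 * K / r0)) with K in HH by (field; lra). lra. }
    apply Rle_trans with (Qs * / (r0 * HL) * (r0 * HL / 2)). apply Rmult_le_compat_l; lra.
    right. field. split; lra. }
  pose proof (stepA w a b Hw Ha Hb Hser N) as HA.
  apply is_series_Reals in HA.
  destruct (HA (Qs / 2) ltac:(lra)) as [M0 HM0].
  specialize (HM0 M0 (le_n _)).
  rewrite sum_f_R0_sumr, sumr_minus in HM0.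
  rewrite sumr_front in HM0.
  pose proof (sumr_nonneg (fun m => QQ w (S N) (a (S m))) M0 (fun m => QQ_nonneg w (S N) (a (S m)) Hw (Ha (S m)))).
  pose proof (Hsumb (S M0)).
  fold s in HM0. fold Qs in HM0.
  unfold R_dist in HM0. rewrite Rminus_0_r in HM0.
  apply Rabs_def2 in HM0. lra.
Qed.

Lemma si_le (x : Z -> R) : strictly_increasing x -> forall n m, (n <= m)%Z -> x n <= x m.
Proof. intros H n m Hnm. destruct (Z.eq_dec n m). subst; lra. left; apply H; lia. Qed.

Lemma si_rev (x : Z -> R) : strictly_increasing x -> forall n m, x n < x m -> (n < m)%Z.
Proof. intros H n m Hx. destruct (Z_lt_le_dec n m); auto. pose proof (si_le x H m n l). lra. Qed.

Lemma ud_up (x : Z -> R) c : (forall n, c <= x n - x (n - 1)%Z) ->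
  forall k : nat, x 0%Z + INR k * c <= x (Z.of_nat k).
Proof.
  intros H k; induction k. simpl. lra.
  rewrite S_INR. pose proof (H (Z.of_nat (S k))).
  replace (Z.of_nat (S k) - 1)%Z with (Z.of_nat k) in H0 by lia. lra.
Qed.

Lemma ud_down (x : Z -> R) c : (forall n, c <= x n - x (n - 1)%Z) ->
  forall k : nat, x (- Z.of_nat k)%Z <= x 0%Z - INR k * c.
Proof.
  intros H k; induction k. simpl. lra.
  rewrite S_INR. pose proof (H (- Z.of_nat k)%Z).
  replace (- Z.of_nat k - 1)%Z with (- Z.of_nat (S k))%Z in H0 by lia. lra.
Qed.

Lemma transition (x : Z -> R) : uniformly_discrete x ->
  exists n0, x (n0 - 1)%Z < 0 /\ 0 <= x n0.
Proof.
  intros [Hsi [c [C [Hc [HcC Hg]]]]].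
  assert (Hg1 : forall n, c <= x n - x (n - 1)%Z) by (intros n; apply Hg).
  destruct (INR_unbounded (Rabs (x 0%Z) / c)) as [k Hk].
  assert (Hkc : INR k * c > Rabs (x 0%Z)).
  { apply Rmult_gt_compat_r with (r := c) in Hk; [|lra].
    replace (Rabs (x 0%Z) / c * c) with (Rabs (x 0%Z)) in Hk by (field; lra). lra. }
  pose proof (ud_up x c Hg1 k). pose proof (ud_down x c Hg1 k).
  pose proof (Rle_abs (x 0%Z)). pose proof (Rle_abs (- x 0%Z)). rewrite Rabs_Ropp in H2.
  assert (Hgen : forall j : nat, x (- Z.of_nat k + Z.of_nat j)%Z < 0 \/
     exists n0, x (n0 - 1)%Z < 0 /\ 0 <= x n0).
  { intros j; induction j.
    - left. replace (- Z.of_nat k + Z.of_nat 0)%Z with (- Z.of_nat k)%Z by lia. lra.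
    - destruct IHj as [Hl | Hr]; [|right; auto].
      destruct (Rlt_le_dec (x (- Z.of_nat k + Z.of_nat (S j))%Z) 0). left; auto.
      right. exists (- Z.of_nat k + Z.of_nat (S j))%Z. split; auto.
      replace (- Z.of_nat k + Z.of_nat (S j) - 1)%Z with (- Z.of_nat k + Z.of_nat j)%Z by lia. auto. }
  destruct (Hgen (k + k)%nat) as [Hl | Hr]; auto.
  replace (- Z.of_nat k + Z.of_nat (k + k))%Z with (Z.of_nat k) in Hl by lia. lra.
Qed.

Lemma nonneg_iff (x : Z -> R) n0 : strictly_increasing x -> x (n0 - 1)%Z < 0 -> 0 <= x n0 ->
  forall n, 0 <= x n -> (n0 <= n)%Z.
Proof. intros H H1 H2 n Hn. destruct (Z_lt_le_dec n n0); auto.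
  pose proof (si_le x H n (n0 - 1)%Z ltac:(lia)). lra. Qed.

Lemma matching (x y : Z -> R) n0 m0 :
  strictly_increasing x -> strictly_increasing y ->
  (forall t : R, 0 <= t -> ((exists n : Z, x n = t) <-> (exists n : Z, y n = t))) ->
  x (n0 - 1)%Z < 0 -> 0 <= x n0 -> y (m0 - 1)%Z < 0 -> 0 <= y m0 ->
  forall k : nat, x (n0 + Z.of_nat k)%Z = y (m0 + Z.of_nat k)%Z.
Proof.
  intros Hx Hy Hxy Hx1 Hx2 Hy1 Hy2 k.
  induction k.
  - replace (n0 + Z.of_nat 0)%Z with n0 by lia. replace (m0 + Z.of_nat 0)%Z with m0 by lia.
    destruct (proj1 (Hxy (x n0) Hx2) (ex_intro _ n0 eq_refl)) as [m Hm].
    destruct (proj2 (Hxy (y m0) Hy2) (ex_intro _ m0 eq_refl)) as [n Hn].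
    pose proof (nonneg_iff y m0 Hy Hy1 Hy2 m ltac:(lra)).
    pose proof (nonneg_iff x n0 Hx Hx1 Hx2 n ltac:(lra)).
    pose proof (si_le y Hy m0 m H). pose proof (si_le x Hx n0 n H0). lra.
  - set (p := (n0 + Z.of_nat (S k))%Z). set (q := (m0 + Z.of_nat (S k))%Z).
    assert (Hp : 0 <= x p) by (pose proof (si_le x Hx n0 p ltac:(unfold p; lia)); lra).
    assert (Hq : 0 <= y q) by (pose proof (si_le y Hy m0 q ltac:(unfold q; lia)); lra).
    destruct (proj1 (Hxy (x p) Hp) (ex_intro _ p eq_refl)) as [m Hm].
    destruct (proj2 (Hxy (y q) Hq) (ex_intro _ q eq_refl)) as [n Hn].
    pose proof (Hx (n0 + Z.of_nat k)%Z p ltac:(unfold p; lia)).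
    pose proof (Hy (m0 + Z.of_nat k)%Z q ltac:(unfold q; lia)).
    pose proof (si_rev y Hy (m0 + Z.of_nat k)%Z m ltac:(lra)).
    pose proof (si_rev x Hx (n0 + Z.of_nat k)%Z n ltac:(lra)).
    pose proof (si_le y Hy q m ltac:(unfold q; lia)).
    pose proof (si_le x Hx p n ltac:(unfold p; lia)). lra.
Qed.

Lemma shift_series (a : nat -> R) (l : R) k : (forall i, (i < k)%nat -> a i = 0) ->
  is_series a l -> is_series (fun m => a (k + m)%nat) l.
Proof.
  revert a; induction k as [|k IH]; intros a Ha Hs.
  - exact Hs.
  - assert (H1 : is_series (fun m => a (S m)) l).
    { apply is_series_incr_1. rewrite (Ha 0%nat ltac:(lia)).
      replace (plus l 0) with (l + 0)%R by reflexivity. rewrite Rplus_0_r. auto. }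
    apply (IH (fun m => a (S m))) in H1. exact H1.
    intros i Hi. apply Ha. lia.
Qed.

Lemma eq_series (x y : Z -> R) n0 m0 :
  (forall k : nat, x (n0 + Z.of_nat k)%Z = y (m0 + Z.of_nat k)%Z) ->
  (forall j : nat, in_equilibrium x (n0 + Z.of_nat j)%Z) ->
  (forall j : nat, in_equilibrium y (m0 + Z.of_nat j)%Z) ->
  forall j : nat, is_series (fun i => F (x (n0 + Z.of_nat j)%Z - x (n0 - 1 - Z.of_nat i)%Z)
                                  - F (x (n0 + Z.of_nat j)%Z - y (m0 - 1 - Z.of_nat i)%Z)) 0.
Proof.
  intros Hm Ex Ey j.
  destruct (Ex j) as [Lx [Hlx Hrx]]. destruct (Ey j) as [Ly [Hly Hry]].
  apply is_series_Reals in Hlx, Hrx, Hly, Hry.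
  assert (Lx = Ly).
  { apply is_series_unique in Hry. rewrite <- Hry. symmetry. apply is_series_unique.
    eapply is_series_ext; [|exact Hrx]. intros k. unfold right_term.
    replace (n0 + Z.of_nat j + Z.of_nat (S k))%Z with (n0 + Z.of_nat (j + S k))%Z by lia.
    replace (m0 + Z.of_nat j + Z.of_nat (S k))%Z with (m0 + Z.of_nat (j + S k))%Z by lia.
    rewrite !Hm. reflexivity. }
  subst Ly.
  pose proof (ser_minus _ _ _ _ Hlx Hly) as Hd. rewrite Rminus_eq_0 in Hd.
  apply (shift_series _ _ j) in Hd.
  - eapply is_series_ext; [|exact Hd]. intros i. simpl. unfold left_term.
    replace (n0 + Z.of_nat j - Z.of_nat (S (j + i)))%Z with (n0 - 1 - Z.of_nat i)%Z by lia.
    replace (m0 + Z.of_nat j - Z.of_nat (S (j + i)))%Z with (m0 - 1 - Z.of_nat i)%Z by lia.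
    rewrite Hm. reflexivity.
  - intros i Hi. unfold left_term.
    replace (n0 + Z.of_nat j - Z.of_nat (S i))%Z with (n0 + Z.of_nat (j - S i))%Z by lia.
    replace (m0 + Z.of_nat j - Z.of_nat (S i))%Z with (m0 + Z.of_nat (j - S i))%Z by lia.
    rewrite !Hm. ring.
Qed.

Lemma ser_opp (a : nat -> R) (l : R) : is_series a l -> is_series (fun n => - a n) (- l).
Proof. intros H. exact (is_series_opp a l H). Qed.

Theorem mainTheorem4 (x y : Z -> R) :
  uniformly_discrete x ->
  uniformly_discrete y ->
  (forall t : R, 0 <= t -> ((exists n : Z, x n = t) <-> (exists n : Z, y n = t))) ->
  (forall n : Z, 0 <= x n -> in_equilibrium x n) ->
  (forall n : Z, 0 <= y n -> in_equilibrium y n) ->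
  forall t : R, t < 0 -> ((exists n : Z, x n = t) <-> (exists n : Z, y n = t)).
Proof.
  intros Hux Huy Hxy Eqx Eqy.
  destruct (transition x Hux) as [n0 [Hx1 Hx2]].
  destruct (transition y Huy) as [m0 [Hy1 Hy2]].
  destruct Hux as [Hsx [cx [Cx [Hcx [HcCx Hgx]]]]].
  destruct Huy as [Hsy [cy [Cy [Hcy [HcCy Hgy]]]]].
  pose proof (matching x y n0 m0 Hsx Hsy Hxy Hx1 Hx2 Hy1 Hy2) as Hm.
  assert (Ex : forall j : nat, in_equilibrium x (n0 + Z.of_nat j)%Z).
  { intros j. apply Eqx. pose proof (si_le x Hsx n0 (n0 + Z.of_nat j)%Z ltac:(lia)). lra. }
  assert (Ey : forall j : nat, in_equilibrium y (m0 + Z.of_nat j)%Z).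
  { intros j. apply Eqy. pose proof (si_le y Hsy m0 (m0 + Z.of_nat j)%Z ltac:(lia)). lra. }
  pose proof (eq_series x y n0 m0 Hm Ex Ey) as Hser.
  set (w := fun j : nat => x (n0 + Z.of_nat j)%Z) in *.
  set (a := fun i : nat => x (n0 - 1 - Z.of_nat i)%Z) in *.
  set (b := fun i : nat => y (m0 - 1 - Z.of_nat i)%Z) in *.
  assert (Hw : forall i j, (i < j)%nat -> w i < w j).
  { intros i j Hij. unfold w. apply Hsx. lia. }
  assert (HwC : forall i, w (S i) - w i <= Cx).
  { intros i. unfold w. pose proof (proj2 (Hgx (n0 + Z.of_nat (S i))%Z)).
    replace (n0 + Z.of_nat (S i) - 1)%Z with (n0 + Z.of_nat i)%Z in H by lia. lra. }
  assert (Hw0 : 0 <= w 0%nat) by (unfold w; replace (n0 + Z.of_nat 0)%Z with n0 by lia; lra).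
  assert (Ha : forall m, a m < 0).
  { intros m. unfold a. pose proof (si_le x Hsx (n0 - 1 - Z.of_nat m)%Z (n0 - 1)%Z ltac:(lia)). lra. }
  assert (Hb : forall m, b m < 0).
  { intros m. unfold b. pose proof (si_le y Hsy (m0 - 1 - Z.of_nat m)%Z (m0 - 1)%Z ltac:(lia)). lra. }
  assert (Hac : forall m, a (S m) <= a m - cx).
  { intros m. unfold a. pose proof (proj1 (Hgx (n0 - 1 - Z.of_nat m)%Z)).
    replace (n0 - 1 - Z.of_nat m - 1)%Z with (n0 - 1 - Z.of_nat (S m))%Z in H by lia. lra. }
  assert (Hbc : forall m, b (S m) <= b m - cy).
  { intros m. unfold b. pose proof (proj1 (Hgy (m0 - 1 - Z.of_nat m)%Z)).
    replace (m0 - 1 - Z.of_nat m - 1)%Z with (m0 - 1 - Z.of_nat (S m))%Z in H by lia. lra. }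
  assert (Hab : forall i, a i = b i).
  { intros i. induction i as [k IH] using (well_founded_induction lt_wf).
    assert (Hs2 : forall j, is_series (fun m => F (w j - a (k + m)%nat) - F (w j - b (k + m)%nat)) 0).
    { intros j. apply (shift_series (fun i => F (w j - a i) - F (w j - b i)) 0 k).
      - intros i Hi. rewrite (IH i Hi). ring.
      - apply Hser. }
    destruct (total_order_T (a k) (b k)) as [[Hlt|Heq]|Hgt]; auto; exfalso.
    - apply (core w (fun m => b (k + m)%nat) (fun m => a (k + m)%nat) cx Cx); auto.
      + lra.
      + intros m. pose proof (Hb (k + m)%nat). lra.
      + rewrite Nat.add_0_r. auto.
      + intros m. replace (k + S m)%nat with (S (k + m)) by lia. apply Hac.
      + intros j. specialize (Hs2 j). apply ser_opp in Hs2. rewrite Ropp_0 in Hs2.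
        eapply is_series_ext; [|exact Hs2]. intros m. simpl.
        change (- (F (w j - a (k + m)%nat) - F (w j - b (k + m)%nat)) = F (w j - b (k + m)%nat) - F (w j - a (k + m)%nat)). ring.
    - apply (core w (fun m => a (k + m)%nat) (fun m => b (k + m)%nat) cy Cx); auto.
      + lra.
      + intros m. pose proof (Ha (k + m)%nat). lra.
      + rewrite Nat.add_0_r. auto.
      + intros m. replace (k + S m)%nat with (S (k + m)) by lia. apply Hbc. }
  intros t Ht. split; intros [n Hn].
  - assert (Hn0 : (n < n0)%Z).
    { destruct (Z_lt_le_dec n n0); auto. pose proof (si_le x Hsx n0 n l). lra. }
    exists (m0 - 1 - Z.of_nat (Z.to_nat (n0 - 1 - n)))%Z.
    change (b (Z.to_nat (n0 - 1 - n)) = t). rewrite <- Hab. unfold a.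
    replace (n0 - 1 - Z.of_nat (Z.to_nat (n0 - 1 - n)))%Z with n by lia. auto.
  - assert (Hn0 : (n < m0)%Z).
    { destruct (Z_lt_le_dec n m0); auto. pose proof (si_le y Hsy m0 n l). lra. }
    exists (n0 - 1 - Z.of_nat (Z.to_nat (m0 - 1 - n)))%Z.
    change (a (Z.to_nat (m0 - 1 - n)) = t). rewrite Hab. unfold b.
    replace (m0 - 1 - Z.of_nat (Z.to_nat (m0 - 1 - n)))%Z with n by lia. auto.
Qed.
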